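(* Let $M$ be a $3$-connected matroid with $P\subseteq E(M)$ such that $M|P\cong U_{3,5}$. Suppose $\mathrm{cl}(P)$ contains no triangles and $P$ contains no triads. If $M\backslash p$ is not $3$-connected for some $p\in P$, then there is a labelling $\{p_1,p_2,p_3,p_4\}$ of $P-p$ such that $M\backslash p_i\backslash p_j$ is $3$-connected for each $i\in\{1,2\}$ and $j\in\{3,4\}$. *)

(* Defs.v *)
From HB Require Import structures.
From mathcomp Require Import all_boot.
Set Implicit Arguments. Unset Strict Implicit. Unset Printing Implicit Defensive.

Record matroid (T : finType) := Matroid {
  ground : {set T};
  rank : {set T} -> nat;
  rank_le_card : forall X : {set T}, X \subset ground -> rank X <= #|X|;
  rank_mono : forall X Y : {set T}, X \subset Y -> Y \subset ground -> rank X <= rank Y;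
  rank_submod : forall X Y : {set T}, X \subset ground -> Y \subset ground ->
    rank (X :|: Y) + rank (X :&: Y) <= rank X + rank Y
}.

Section Defs.
Variables (T : finType) (M : matroid T).
Local Notation E := (ground M).
Local Notation r := (rank M).

(* A k-separation of the restriction M|S (for deletion M\D take S = E - D):
   a partition (X, S - X) with |X|, |S - X| >= k and
   r(X) + r(S - X) - r(S) <= k - 1. *)
Definition ksep (S : {set T}) (k : nat) (X : {set T}) : bool :=
  [&& X \subset S, k <= #|X|, k <= #|S :\: X| &
      r X + r (S :\: X) < r S + k].

Definition three_connected_on (S : {set T}) : Prop :=
  forall (k : nat) (X : {set T}), 1 <= k < 3 -> ~~ ksep S k X.

Definition three_connected : Prop := three_connected_on E.

Definition three_connected_del (D : {set T}) : Prop :=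
  three_connected_on (E :\: D).

Definition mclosure (X : {set T}) : {set T} :=
  [set x in E | r (x |: X) == r X].

Definition dependent (X : {set T}) : bool := r X < #|X|.

Definition circuit (C : {set T}) : bool :=
  [&& C \subset E, dependent C &
      [forall Y : {set T}, (Y \proper C) ==> ~~ dependent Y]].

Definition dual_rank (X : {set T}) : nat := #|X| + r (E :\: X) - r E.

Definition codependent (X : {set T}) : bool := dual_rank X < #|X|.

Definition cocircuit (C : {set T}) : bool :=
  [&& C \subset E, codependent C &
      [forall Y : {set T}, (Y \proper C) ==> ~~ codependent Y]].

Definition mtriangle (C : {set T}) : bool := circuit C && (#|C| == 3).
Definition mtriad (C : {set T}) : bool := cocircuit C && (#|C| == 3).

End Defs.

Definition uniform_rank (k n : nat) (X : {set 'I_n}) : nat := minn #|X| k.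

Definition restr_iso_uniform (T : finType) (M : matroid T) (P : {set T})
  (k n : nat) : Prop :=
  P \subset ground M /\
  exists f : 'I_n -> T, [/\ injective f, f @: setT = P &
     forall X : {set 'I_n}, rank M (f @: X) = uniform_rank k X].

(* Main.v *)
Require Import Defs.
From HB Require Import structures.
From mathcomp Require Import all_boot zify.
From Stdlib Require Import Classical.

Section Key.
Set Implicit Arguments.
Variables (T : finType) (M : matroid T) (P : {set T}) (a b c d p : T) (X Y U V : {set T}).
Local Notation E := (ground M).
Local Notation r := (rank M).
Hypothesis H3 : three_connected M.
Hypothesis HPE : P \subset E.
Hypothesis HP : P = [set a; b; c; d; p].
Hypothesis Huniq : uniq [:: a; b; c; d; p].
Hypothesis rP : forall S : {set T}, S \subset P -> r S = minn #|S| 3.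
Hypothesis Htri : forall C : {set T}, C \subset mclosure M P -> ~~ mtriangle M C.
Hypothesis Htriad : forall C : {set T}, C \subset P -> ~~ mtriad M C.
Hypothesis HXE : X \subset E.
Hypothesis HYE : Y \subset E.
Hypothesis HXY : forall z, z \in E -> (z \in X) + (z \in Y) + (z == p) = 1.
Hypothesis Ha : a \in X.
Hypothesis Hb : b \in X.
Hypothesis Hc : c \in Y.
Hypothesis Hd : d \in Y.
Hypothesis Hr : r X + r Y <= r E + 1.
Hypothesis HUE : U \subset E.
Hypothesis HVE : V \subset E.
Hypothesis HUV : forall z, z \in E -> (z \in U) + (z \in V) + (z == a) + (z == c) = 1.
Hypothesis HU2 : 1 < #|U|.
Hypothesis HV2 : 1 < #|V|.
Hypothesis HrUV : r U + r V <= r E + 1.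

Ltac clean := repeat (match goal with H : ?t |- _ =>
   lazymatch t with
   | is_true (leq _ _) => fail
   | @eq nat _ _ => fail
   | _ => clear H
   end end).

Ltac slia0 := try clear H3; try clear HPE; try clear HP; try clear Huniq; try clear rP;
  try clear Htri; try clear Htriad; try clear HXE; try clear HYE; try clear HXY; try clear Ha;
  try clear Hb; try clear Hc; try clear Hd; try clear HUE; try clear HVE; try clear HUV; lia.
Ltac slia := try clear HU2; try clear HV2; try clear HrUV; try clear Hr; clean; lia.

Lemma inPE z : z \in P -> z \in E.
Proof. by move=> /(subsetP HPE). Qed.
Lemma aP : a \in P. Proof. by rewrite HP !inE eqxx. Qed.
Lemma bP : b \in P. Proof. by rewrite HP !inE eqxx !orbT. Qed.
Lemma cP : c \in P. Proof. by rewrite HP !inE eqxx !orbT. Qed.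
Lemma dP : d \in P. Proof. by rewrite HP !inE eqxx !orbT. Qed.
Lemma pP : p \in P. Proof. by rewrite HP !inE eqxx !orbT. Qed.
Lemma aE : a \in E. Proof. exact: inPE aP. Qed.
Lemma bE : b \in E. Proof. exact: inPE bP. Qed.
Lemma cE : c \in E. Proof. exact: inPE cP. Qed.
Lemma dE : d \in E. Proof. exact: inPE dP. Qed.
Lemma pE : p \in E. Proof. exact: inPE pP. Qed.

Lemma neqs : [/\ [/\ a != b, a != c, a != d & a != p],
   [/\ b != c, b != d & b != p], [/\ c != d & c != p] & d != p].
Proof.
move: Huniq; rewrite /= !inE !negb_or => /and5P [/and4P[h1 h2 h3 h4] /and3P[h5 h6 h7] /andP[h8 h9] h10 _].
by split; [split|split|split|].
Qed.


Lemma pXY : (p \notin X) && (p \notin Y).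
Proof. by move: (HXY pE); rewrite eqxx; case: (p \in X); case: (p \in Y). Qed.
Lemma Xnot z : z \in E -> z \in X -> (z \notin Y) && (z != p).
Proof. by move=> zE zX; move: (HXY zE); rewrite zX; case: (z \in Y); case: (z == p). Qed.
Lemma Ynot z : z \in E -> z \in Y -> (z \notin X) && (z != p).
Proof. by move=> zE zY; move: (HXY zE); rewrite zY; case: (z \in X); case: (z == p). Qed.
Lemma aUV : (a \notin U) && (a \notin V).
Proof. by move: (HUV aE); rewrite eqxx; case: (a \in U); case: (a \in V); case: (a == c). Qed.
Lemma cUV : (c \notin U) && (c \notin V).
Proof. by move: (HUV cE); rewrite eqxx; case: (c \in U); case: (c \in V); case: (c == a). Qed.

Definition lab z := if z == a then 0 else if z == b then 1 else if z == c then 2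
  else if z == d then 3 else if z == p then 4 else if z \in U then (if z \in X then 5 else 6)
  else (if z \in X then 7 else 8).

Variant lab_spec z : nat -> Prop :=
 | LabA of z = a : lab_spec z 0
 | LabB of z = b : lab_spec z 1
 | LabC of z = c : lab_spec z 2
 | LabD of z = d : lab_spec z 3
 | LabP of z = p : lab_spec z 4
 | Lab5 of z \in U & z \notin V & z \in X & z \notin Y & z \notin P : lab_spec z 5
 | Lab6 of z \in U & z \notin V & z \notin X & z \in Y & z \notin P : lab_spec z 6
 | Lab7 of z \notin U & z \in V & z \in X & z \notin Y & z \notin P : lab_spec z 7
 | Lab8 of z \notin U & z \in V & z \notin X & z \in Y & z \notin P : lab_spec z 8.

Lemma labP z : z \in E -> lab_spec z (lab z).
Proof.
move=> zE; rewrite /lab.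
case: eqP => [->|za]; first by constructor.
case: eqP => [->|zb]; first by constructor.
case: eqP => [->|zc]; first by constructor.
case: eqP => [->|zd]; first by constructor.
case: eqP => [->|zp]; first by constructor.
have zP : z \notin P.
  by rewrite HP !inE; repeat (case: eqP => //=).
have zpn : (z == p) = false by apply/eqP.
have zan : (z == a) = false by apply/eqP.
have zcn : (z == c) = false by apply/eqP.
have hx := HXY zE; have hu := HUV zE.
move: hx hu; rewrite zpn zan zcn.
by case zU: (z \in U); case zV: (z \in V); case zX: (z \in X); case zY: (z \in Y);
  rewrite //= => _ _; constructor; rewrite ?zU ?zV ?zX ?zY.
Qed.

Lemma lab_lt z : lab z < 9.
Proof. rewrite /lab; do 5 case: (_ == _) => //; by do 2 case: (_ \in _). Qed.

Definition SL (s : seq nat) := [set z in E | lab z \in s].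
Definition rho s := r (SL s).

Lemma SL_sub s : SL s \subset E.
Proof. by apply/subsetP => z; rewrite inE => /andP[]. Qed.

Lemma all9 (f : pred nat) : all f (iota 0 9) -> forall z, f (lab z).
Proof. by move=> /allP H z; apply: H; rewrite mem_iota lab_lt. Qed.

Lemma sub4 s t u w : all (fun l => ((l \in u) == ((l \in s) || (l \in t))) &&
   ((l \in w) == ((l \in s) && (l \in t)))) (iota 0 9) -> rho u + rho w <= rho s + rho t.
Proof.
move=> /all9 H; rewrite /rho.
have -> : SL u = SL s :|: SL t.
  apply/setP => z; rewrite !inE; case/andP: (H z) => /eqP -> _; by case: (z \in E).
have -> : SL w = SL s :&: SL t.
  apply/setP => z; rewrite !inE; case/andP: (H z) => _ /eqP ->; by case: (z \in E).
by apply: rank_submod; apply: SL_sub.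
Qed.

Lemma mono s t : all (fun l => (l \in s) ==> (l \in t)) (iota 0 9) -> rho s <= rho t.
Proof.
move=> /all9 H; rewrite /rho; apply: rank_mono (SL_sub _).
apply/subsetP => z; rewrite !inE => /andP[-> /(implyP (H z))] //.
Qed.

Lemma rho_all : rho (iota 0 9) = r E.
Proof.
rewrite /rho; have -> // : SL (iota 0 9) = E.
apply/setP => z; rewrite /SL in_set. have -> : lab z \in iota 0 9 by rewrite mem_iota lab_lt. by rewrite andbT.
Qed.

Lemma rho_nil : rho [::] = 0.
Proof.
have : rho [::] <= #|SL [::]| by apply: rank_le_card (SL_sub _).
have -> : SL [::] = set0 by apply/setP => z; rewrite !inE andbF.
by rewrite cards0; case: (rho [::]).
Qed.


Lemma labs : [/\ lab a = 0, lab b = 1, lab c = 2, lab d = 3 & lab p = 4].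
Proof.
case: neqs => [[ab ac ad ap] [bc bd bp] [cd cp] dp].
rewrite /lab !eqxx eq_sym (negbTE ab) eq_sym (negbTE ac) eq_sym (negbTE bc).
rewrite eq_sym (negbTE ad) eq_sym (negbTE bd) eq_sym (negbTE cd).
by rewrite eq_sym (negbTE ap) eq_sym (negbTE bp) eq_sym (negbTE cp) eq_sym (negbTE dp).
Qed.

Definition elem l := nth a [:: a; b; c; d; p] l.

Lemma lab_elem l : l < 5 -> lab (elem l) = l.
Proof. by case: labs => A B C D Pp; do 5 (case: l => [|l] //=). Qed.

Lemma elemE l : l < 5 -> elem l \in E.
Proof.
move=> l5; apply: inPE; rewrite /elem.
by case: l l5 => [|[|[|[|[|l]]]]] //= _; [exact: aP|exact: bP|exact: cP|exact: dP|exact: pP].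
Qed.

Lemma elem_lab z : z \in E -> lab z < 5 -> z = elem (lab z).
Proof. by move=> zE; case: (labP zE). Qed.

Lemma SLP t : all (fun l => l < 5) t -> SL t = [set x in map elem t].
Proof.
move=> /allP Ht; apply/setP => z; rewrite !inE.
apply/andP/mapP => [[zE zt]|[l lt ->]].
  by exists (lab z) => //; apply: elem_lab => //; apply: Ht.
have l5 := Ht l lt; by rewrite elemE // lab_elem.
Qed.

Lemma rhoP t : all (fun l => l < 5) t -> uniq t -> rho t = minn (size t) 3.
Proof.
move=> Ht ut; rewrite /rho rP; last first.
  rewrite (@SLP t Ht); apply/subsetP => z; rewrite inE => /mapP [l lt ->].
  have l5 := allP Ht l lt; rewrite HP /elem !inE.
  by case: l l5 {lt} => [|[|[|[|[|l]]]]] //= _; rewrite ?eqxx ?orbT.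
rewrite (@SLP t Ht) cardsE; congr minn.
rewrite (card_uniqP _) ?size_map // map_inj_in_uniq // => x y xt yt exy.
by rewrite -(@lab_elem x (allP Ht x xt)) exy lab_elem // (allP Ht y yt).
Qed.


Lemma sepP k (A : {set T}) : 1 <= k < 3 -> A \subset E -> k <= #|A| -> k <= #|E :\: A| ->
  r E + k <= r A + r (E :\: A).
Proof.
move=> hk AE kA kB; have := H3 k A hk.
by rewrite /ksep AE kA kB /= -leqNgt.
Qed.

Lemma cardP5 : #|P| = 5.
Proof.
have -> : P = [set x in [:: a; b; c; d; p]] by rewrite HP; apply/setP => x; rewrite !inE -!orbA.
by rewrite cardsE (card_uniqP Huniq).
Qed.

Lemma cardE5 : 5 <= #|E|.
Proof. rewrite -cardP5; exact: subset_leq_card HPE. Qed.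

Lemma indep2 (A : {set T}) : A \subset E -> #|A| <= 2 -> #|A| <= r A.
Proof.
move=> AE; have cD : #|E :\: A| = #|E| - #|A| by rewrite cardsDS.
have h5 := cardE5; have hm : r (E :\: A) <= r E by apply: rank_mono => //; apply: subsetDl.
case: (posnP #|A|) => [-> //|A0] A2.
have : (#|A| == 1) || (#|A| == 2) by move: A0 A2; case: #|A| => [|[|[|]]].
case/orP => /eqP A1.
- have := @sepP 1 A isT AE; rewrite cD A1 => /(_ isT); move: h5 hm A1; slia.
- have := @sepP 2 A isT AE; rewrite cD A1 => /(_ isT); move: h5 hm A1; slia.
Qed.

Lemma cork (A : {set T}) : A \subset E -> #|A| <= 2 -> r E <= r (E :\: A).
Proof.
move=> AE; have cD : #|E :\: A| = #|E| - #|A| by rewrite cardsDS.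
have h5 := cardE5; have hA : r A <= #|A| by apply: rank_le_card.
case: (posnP #|A|) => [A0|A0] A2.
  by rewrite (cards0_eq A0) setD0.
have : (#|A| == 1) || (#|A| == 2) by move: A0 A2; case: #|A| => [|[|[|]]].
case/orP => /eqP A1.
- have := @sepP 1 A isT AE; rewrite cD A1 => /(_ isT); move: h5 hA A1; slia.
- have := @sepP 2 A isT AE; rewrite cD A1 => /(_ isT); move: h5 hA A1; slia.
Qed.

Lemma rho_card s : rho s <= #|SL s|.
Proof. exact: rank_le_card (SL_sub _). Qed.

Lemma L1two s t z1 z2 w1 w2 : all (fun l => (l \in s) != (l \in t)) (iota 0 9) ->
  z1 \in E -> z2 \in E -> lab z1 \in s -> lab z2 \in s -> z1 != z2 ->
  w1 \in E -> w2 \in E -> lab w1 \in t -> lab w2 \in t -> w1 != w2 ->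
  r E + 2 <= rho s + rho t.
Proof.
move=> /all9 H z1E z2E z1s z2s z12 w1E w2E w1t w2t w12.
rewrite /rho; have -> : SL t = E :\: SL s.
  apply/setP => z; rewrite !inE; case zE: (z \in E) => //=.
  by move: (H z); case: (lab z \in s); case: (lab z \in t).
apply: sepP => //; first exact: SL_sub.
  by apply/card_gt1P; exists z1, z2; rewrite !inE z1E z2E z1s z2s.
have hw : forall w, w \in E -> lab w \in t -> w \in E :\: SL s.
  by move=> w wE wt; rewrite !inE wE andbT; move: (H w); rewrite wt; case: (lab w \in s).
by apply/card_gt1P; exists w1, w2; rewrite !hw.
Qed.

Lemma L1one s t z1 w1 : all (fun l => (l \in s) != (l \in t)) (iota 0 9) ->
  z1 \in E -> lab z1 \in s -> w1 \in E -> lab w1 \in t -> r E + 1 <= rho s + rho t.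
Proof.
move=> /all9 H z1E z1s w1E w1t.
rewrite /rho; have -> : SL t = E :\: SL s.
  apply/setP => z; rewrite !inE; case zE: (z \in E) => //=.
  by move: (H z); case: (lab z \in s); case: (lab z \in t).
apply: sepP => //; first exact: SL_sub.
  by apply/card_gt0P; exists z1; rewrite !inE z1E z1s.
have hw : forall w, w \in E -> lab w \in t -> w \in E :\: SL s.
  by move=> w wE wt; rewrite !inE wE andbT; move: (H w); rewrite wt; case: (lab w \in s).
by apply/card_gt0P; exists w1; rewrite !hw.
Qed.

Lemma sub4g s t : rho (s ++ t) + rho [seq l <- s | l \in t] <= rho s + rho t.
Proof.
apply: sub4; apply/allP => l _; rewrite mem_cat mem_filter; by case: (l \in s); case: (l \in t).
Qed.

Lemma absorb s t : 2 < count (fun l => l \in s) [:: 0;1;2;3;4] ->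
  all (fun l => (l \in t) ==> ((l \in s) || (l < 5))) (iota 0 9) -> rho t <= rho s.
Proof.
move=> hc ht.
have h1 := sub4g [:: 0;1;2;3;4] s.
have h2 : rho [:: 0;1;2;3;4] = 3 by rewrite rhoP.
have h3 : rho [seq l <- [:: 0; 1; 2; 3; 4] | l \in s] = 3.
  rewrite rhoP ?size_filter; first by move: hc; case: count => [|[|[|n]]].
    by apply/allP => l; rewrite mem_filter => /andP[_]; case: l => [|[|[|[|[|l]]]]].
  by apply: filter_uniq.
have h4 : rho t <= rho ([:: 0; 1; 2; 3; 4] ++ s).
  apply: mono; apply/allP => l lin; have := allP ht l lin; rewrite mem_cat.
  case: (l \in t) => //=; case: (l \in s); rewrite ?orbT //= orbF => l5.
  by rewrite !inE; move: l5; case: l {lin} => [|[|[|[|[|l]]]]].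
rewrite h2 h3 in h1. slia.
Qed.


Lemma SLP_sub t : all (fun l => l < 5) t -> SL t \subset P.
Proof.
move=> Ht; rewrite (@SLP t Ht); apply/subsetP => z; rewrite inE => /mapP [l lt ->].
have l5 := allP Ht l lt; rewrite HP /elem !inE.
by case: l l5 {lt} => [|[|[|[|[|l]]]]] //= _; rewrite ?eqxx ?orbT.
Qed.

Lemma cardSLP t : all (fun l => l < 5) t -> uniq t -> #|SL t| = size t.
Proof.
move=> Ht ut; rewrite (@SLP t Ht) cardsE.
rewrite (card_uniqP _) ?size_map // map_inj_in_uniq // => x y xt yt exy.
by rewrite -(@lab_elem x (allP Ht x xt)) exy lab_elem // (allP Ht y yt).
Qed.

Lemma T3 t s : all (fun l => l < 5) t -> uniq t -> size t = 3 ->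
  all (fun l => (l \in s) == (l \notin t)) (iota 0 9) -> r E <= rho s.
Proof.
move=> Ht ut st /all9 Hs.
have CP := @SLP_sub t Ht; have cC := @cardSLP t Ht ut; rewrite st in cC.
have CE : SL t \subset E by apply: SL_sub.
have -> : rho s = r (E :\: SL t).
  rewrite /rho; congr (rank M _); apply/setP => z; rewrite !inE; case: (z \in E) => //=.
  by move: (Hs z); case: (lab z \in s); case: (lab z \in t).
case: (leqP (r E) (r (E :\: SL t))) => // lt; exfalso.
apply: (negP (Htriad CP)).
rewrite /mtriad /cocircuit cC eqxx andbT CE /=; apply/andP; split.
  by rewrite /codependent /dual_rank cC; slia.
apply/forallP => A; apply/implyP => AC.
have AE : A \subset E := subset_trans (proper_sub AC) CE.
have cA := proper_card AC; rewrite cC in cA.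
have := @cork A AE (ltnSE cA).
by rewrite /codependent /dual_rank -leqNgt; slia.
Qed.

Lemma tri u v x : u \in P -> v \in P -> u != v -> x \in E -> x \notin P ->
  r [set u; v; x] <= 2 -> False.
Proof.
move=> uP vP uv xE xP h2.
have xu : x != u by apply: contraNneq xP => ->.
have xv : x != v by apply: contraNneq xP => ->.
have CE : [set u; v; x] \subset E.
  apply/subsetP => y; rewrite !inE => /orP[/orP[]|] /eqP ->; rewrite // ?inPE //.
have cC : #|[set u; v; x]| = 3.
  have -> : [set u; v; x] = [set y in [:: u; v; x]] by apply/setP => y; rewrite !inE -!orbA.
  by rewrite cardsE (card_uniqP _) //= !inE negb_or uv eq_sym xu eq_sym xv.
have uvP : [set u; v] \subset P by apply/subsetP => y; rewrite !inE => /orP[] /eqP ->.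
have ruv : r [set u; v] = 2 by rewrite rP // cards2 uv.
have hcl : r (x |: P) <= r P.
  have := rank_submod CE HPE.
  have -> : [set u; v; x] :|: P = x |: P.
    apply/setP => y; rewrite !inE.
    case: (y =P u) => [->|_]; first by rewrite uP !orbT.
    case: (y =P v) => [->|_]; first by rewrite vP !orbT.
    by case: (y =P x).
  have : r [set u; v] <= r ([set u; v; x] :&: P).
    apply: rank_mono; last by apply: subset_trans (subsetIl _ _) CE.
    by rewrite subsetI uvP andbT; apply/subsetP => w; rewrite !inE => /orP[]->; rewrite ?orbT.
  slia.
have Hcl : [set u; v; x] \subset mclosure M P.
  apply/subsetP => y yC; rewrite inE (subsetP CE y yC) /=.
  move: yC; rewrite !inE => /orP[/orP[]|] /eqP ->.
  - by have -> : u |: P = P by apply/setP => z; rewrite !inE; case: eqP => // ->.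
  - by have -> : v |: P = P by apply/setP => z; rewrite !inE; case: eqP => // ->.
  - have : r P <= r (x |: P) by apply: rank_mono; [apply: subsetUr| rewrite subUset sub1set xE].
    by move=> h; rewrite eqn_leq hcl h.
have := Htri Hcl; apply/negP.
rewrite /mtriangle cC eqxx andbT /circuit CE /dependent cC (leq_ltn_trans h2) //=.
rewrite negbK. apply/forallP => A; apply/implyP => AC; rewrite -leqNgt.
have AE : A \subset E := subset_trans (proper_sub AC) CE.
have cA := proper_card AC; rewrite cC in cA.
exact: indep2 AE (ltnSE cA).
Qed.

Lemma region l : #|SL [:: l]| = 0 \/ (#|SL [:: l]| = 1 /\ exists x, x \in E /\ lab x = l) \/
  (exists x y, [/\ x \in E, y \in E, lab x = l, lab y = l & x != y]).
Proof.
case: (ltngtP #|SL [:: l]| 1) => h.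
- by left; case: #|_| h.
- right; right; case/card_gt1P: h => x [y [xS yS xy]].
  move: xS yS; rewrite !inE => /andP[xE /eqP xl] /andP[yE /eqP yl].
  by exists x, y.
- right; left; split => //; have : 0 < #|SL [:: l]| by rewrite h.
  case/card_gt0P => x; rewrite !inE => /andP[xE /eqP xl]; by exists x.
Qed.

Lemma cardsub s t u : all (fun l => (l \in u) ==> (l \in s) || (l \in t)) (iota 0 9) ->
  #|SL u| <= #|SL s| + #|SL t|.
Proof.
move=> /all9 H; apply: leq_trans (leq_card_setU _ _).
apply: subset_leq_card; apply/subsetP => z; rewrite !inE => /andP[zE zu].
by move: (H z); rewrite zu zE /=.
Qed.

Lemma SL_eq (A : {set T}) s : A \subset E -> (forall z, z \in E -> (z \in A) = (lab z \in s)) -> A = SL s.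
Proof.
move=> AE H; apply/setP => z; rewrite !inE.
case zE: (z \in E); first by rewrite H.
by apply/negP => zA; move: (subsetP AE z zA); rewrite zE.
Qed.

Lemma memf : [/\ c \notin X, d \notin X, p \notin X, a \notin Y & b \notin Y] /\
  [/\ p \notin Y, a \notin U, a \notin V, c \notin U & c \notin V].
Proof.
case/andP: pXY => pX pY; case/andP: aUV => aU aV; case/andP: cUV => cU cV.
have := Ynot cE Hc; have := Ynot dE Hd; have := Xnot aE Ha; have := Xnot bE Hb.
by move=> /andP[-> _] /andP[-> _] /andP[-> _] /andP[-> _].
Qed.

Lemma X_SL : X = SL [:: 0; 1; 5; 7].
Proof.
case: memf => [[cX dX pX aY bY] _].
apply: SL_eq => // z zE; case: (labP zE) => [->|->|->|->|->|_ _ h _ _|_ _ h _ _|_ _ h _ _|_ _ h _ _] //=;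
  by rewrite ?Ha ?Hb ?(negbTE cX) ?(negbTE dX) ?(negbTE pX) //; first [rewrite h | rewrite (negbTE h)].
Qed.

Lemma Y_SL : Y = SL [:: 2; 3; 6; 8].
Proof.
case: memf => [[cX dX pX aY bY] [pY _ _ _ _]].
apply: SL_eq => // z zE; case: (labP zE) => [->|->|->|->|->|_ _ _ h _|_ _ _ h _|_ _ _ h _|_ _ _ h _] //=;
  by rewrite ?Hc ?Hd ?(negbTE aY) ?(negbTE bY) ?(negbTE pY) //; first [rewrite h | rewrite (negbTE h)].
Qed.


Lemma UnotV z : z \in E -> z \in U -> z \notin V.
Proof. by move=> zE zU; move: (HUV zE); rewrite zU; case: (z \in V). Qed.
Lemma VnotU z : z \in E -> z \in V -> z \notin U.
Proof. by move=> zE zV; move: (HUV zE); rewrite zV; case: (z \in U). Qed.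

Lemma labA : lab a = 0. Proof. by case: labs. Qed.
Lemma labB : lab b = 1. Proof. by case: labs. Qed.
Lemma labC : lab c = 2. Proof. by case: labs. Qed.
Lemma labD : lab d = 3. Proof. by case: labs. Qed.
Lemma labPp : lab p = 4. Proof. by case: labs. Qed.

Lemma rhoO : rho [:: 0;1;2;3;4;5;6;7;8] = r E.
Proof. exact: rho_all. Qed.

Lemma L1card s t : all (fun l => (l \in s) != (l \in t)) (iota 0 9) ->
  1 < #|SL s| -> 1 < #|SL t| -> r E + 2 <= rho s + rho t.
Proof.
move=> /all9 H cs ct.
rewrite /rho; have eq : SL t = E :\: SL s.
  apply/setP => z; rewrite !inE; case zE: (z \in E) => //=.
  by move: (H z); case: (lab z \in s); case: (lab z \in t).
rewrite eq; apply: sepP => //; first exact: SL_sub.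
by rewrite -eq.
Qed.

Lemma L1lab s t z1 z2 w1 w2 : all (fun l => (l \in s) != (l \in t)) (iota 0 9) ->
  z1 \in E -> z2 \in E -> lab z1 \in s -> lab z2 \in s -> (z1 != z2) || (lab z1 != lab z2) ->
  w1 \in E -> w2 \in E -> lab w1 \in t -> lab w2 \in t -> (w1 != w2) || (lab w1 != lab w2) ->
  r E + 2 <= rho s + rho t.
Proof.
have nl : forall y1 y2, (y1 != y2) || (lab y1 != lab y2) -> y1 != y2.
  by move=> y1 y2 /orP[] // /negP h; apply/negP => /eqP e; apply: h; rewrite e.
move=> H z1E z2E z1s z2s z12 w1E w2E w1t w2t w12.
exact: L1two H z1E z2E z1s z2s (nl _ _ z12) w1E w2E w1t w2t (nl _ _ w12).
Qed.

Lemma wit l : 0 < #|SL [:: l]| -> exists x, x \in E /\ lab x = l.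
Proof. by case/card_gt0P => x; rewrite !inE => /andP[xE /eqP xl]; exists x. Qed.

Lemma wit_card x l : x \in E -> lab x = l -> 0 < #|SL [:: l]|.
Proof. move=> xE xl; apply/card_gt0P; exists x; by rewrite !inE xE xl eqxx. Qed.

Lemma HrL : rho [:: 0;1;5;7] + rho [:: 2;3;6;8] <= r E + 1.
Proof. by rewrite /rho -X_SL -Y_SL. Qed.

Lemma card1 l : l < 5 -> #|SL [:: l]| = 1.
Proof. by move=> l5; rewrite cardSLP //= l5. Qed.

Ltac sides := repeat match goal with H : lab ?z = _ |- context [lab ?z] => rewrite H end;
  rewrite ?labA ?labB ?labC ?labD ?labPp ?aE ?bE ?cE ?dE ?pE ?orbT; try done;
  try (apply/orP; left; assumption).

Lemma D1 : exists x, x \in E /\ (lab x = 5 \/ lab x = 7).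
Proof.
case: (posnP #|SL [:: 5]|) => [c5|]; last by case/wit => x [xE xl]; exists x; auto.
case: (posnP #|SL [:: 7]|) => [c7|]; last by case/wit => x [xE xl]; exists x; auto.
exfalso.
have r5 := rho_card [:: 5]; have r7 := rho_card [:: 7].
have t1 : r E <= rho [:: 2;3;5;6;7;8] by apply: (@T3 [:: 0;1;4]).
have t2 := @sub4 [:: 2;3;6;8] [:: 5;7] [:: 2;3;5;6;7;8] [::] isT.
have t3 := @sub4 [:: 5] [:: 7] [:: 5;7] [::] isT.
have t4 : rho [:: 0;1] <= rho [:: 0;1;5;7] by apply: mono.
have t5 : rho [:: 0;1] = 2 by rewrite rhoP.
have := HrL; have := rho_nil; slia.
Qed.

Lemma D1' : exists x, x \in E /\ (lab x = 6 \/ lab x = 8).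
Proof.
case: (posnP #|SL [:: 6]|) => [c6|]; last by case/wit => x [xE xl]; exists x; auto.
case: (posnP #|SL [:: 8]|) => [c8|]; last by case/wit => x [xE xl]; exists x; auto.
exfalso.
have r6 := rho_card [:: 6]; have r8 := rho_card [:: 8].
have t1 : r E <= rho [:: 0;1;5;6;7;8] by apply: (@T3 [:: 2;3;4]).
have t2 := @sub4 [:: 0;1;5;7] [:: 6;8] [:: 0;1;5;6;7;8] [::] isT.
have t3 := @sub4 [:: 6] [:: 8] [:: 6;8] [::] isT.
have t4 : rho [:: 2;3] <= rho [:: 2;3;6;8] by apply: mono.
have t5 : rho [:: 2;3] = 2 by rewrite rhoP.
have := HrL; have := rho_nil; slia.
Qed.

Lemma D2 : rho [:: 0;1;5;7] <= rho [:: 1;5;7].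
Proof.
case: D1 => x [xE xl].
have t1 : r E + 2 <= rho [:: 1;5;7] + rho [:: 0;2;3;4;6;8].
  by case: xl => xl; apply: (@L1lab _ _ b x a c) => //; sides.
have t2 : rho [:: 0;2;3;4;6;8] <= rho [:: 2;3;4;6;8] by apply: absorb.
have t3 := @sub4 [:: 2;3;6;8] [:: 4] [:: 2;3;4;6;8] [::] isT.
have t4 : rho [:: 4] = 1 by rewrite rhoP.
have := HrL; have := rho_nil; slia.
Qed.

Lemma D3 : rho [:: 2;3;6;8] <= rho [:: 3;6;8].
Proof.
case: D1' => x [xE xl].
have t1 : r E + 2 <= rho [:: 3;6;8] + rho [:: 0;1;2;4;5;7].
  by case: xl => xl; apply: (@L1lab _ _ d x a c) => //; sides.
have t2 : rho [:: 0;1;2;4;5;7] <= rho [:: 0;1;4;5;7] by apply: absorb.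
have t3 := @sub4 [:: 0;1;5;7] [:: 4] [:: 0;1;4;5;7] [::] isT.
have t4 : rho [:: 4] = 1 by rewrite rhoP.
have := HrL; have := rho_nil; slia.
Qed.


Lemma labnP z : z \in E -> 4 < lab z -> z \notin P.
Proof. by move=> zE; case: (labP zE). Qed.

Lemma sub3 u v x s : u \in E -> v \in E -> x \in E -> lab u \in s -> lab v \in s -> lab x \in s ->
  r [set u; v; x] <= rho s.
Proof.
move=> uE vE xE us vs xs; apply: rank_mono (SL_sub _).
by apply/subsetP => y; rewrite !inE => /orP[/orP[]|] /eqP ->; rewrite ?uE ?vE ?xE.
Qed.

Lemma triX x : x \in E -> (lab x = 5 \/ lab x = 7) -> rho [:: 1;5;7] <= 2 -> False.
Proof.
move=> xE xl h; have h2 := D2.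
have h3 : r [set a; b; x] <= rho [:: 0;1;5;7] by case: xl => xl; apply: sub3; sides.
case: neqs => [[ab _ _ _] _ _ _].
apply: (tri aP bP ab xE); last by slia.
by apply: labnP => //; case: xl => ->.
Qed.

Lemma triY x : x \in E -> (lab x = 6 \/ lab x = 8) -> rho [:: 3;6;8] <= 2 -> False.
Proof.
move=> xE xl h; have h2 := D3.
have h3 : r [set c; d; x] <= rho [:: 2;3;6;8] by case: xl => xl; apply: sub3; sides.
case: neqs => [_ _ [cd _] _].
apply: (tri cP dP cd xE); last by slia.
by apply: labnP => //; case: xl => ->.
Qed.


Lemma caseA : b \in U -> p \in U -> d \in V -> False.
Proof.
move=> bU pU dV.
case: memf => [[cX dX pX aY bY] [pY aU aV cU cV]].
have dU := VnotU dE dV; have bV := UnotV bE bU; have pV := UnotV pE pU.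
have U_eq : U = SL [:: 1;4;5;6].
  apply: SL_eq => // z zE; case: (labP zE) => [->|->|->|->|->|h _ _ _ _|h _ _ _ _|h _ _ _ _|h _ _ _ _] //=;
  by rewrite ?bU ?pU ?(negbTE aU) ?(negbTE cU) ?(negbTE dU) //; first [rewrite h | rewrite (negbTE h)].
have V_eq : V = SL [:: 3;7;8].
  apply: SL_eq => // z zE; case: (labP zE) => [->|->|->|->|->|_ h _ _ _|_ h _ _ _|_ h _ _ _|_ h _ _ _] //=;
  by rewrite ?dV ?(negbTE pV) ?(negbTE aV) ?(negbTE cV) ?(negbTE bV) //; first [rewrite h | rewrite (negbTE h)].
have HrUVL : rho [:: 1;4;5;6] + rho [:: 3;7;8] <= r E + 1 by rewrite /rho -U_eq -V_eq.
have cU2 : 1 < #|SL [:: 1;4;5;6]| by rewrite -U_eq.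
have cV2 : 1 < #|SL [:: 3;7;8]| by rewrite -V_eq.
have d2 := D2; have d3 := D3; have hrl := HrL; have r0 := rho_nil; have rO := rhoO.
have c6 := @sub4 [:: 3;6;8] [:: 4] [:: 3;4;6;8] [::] isT.
have c6' : rho [:: 4] = 1 by rewrite rhoP.
have c6'' : rho [:: 3;6;8] <= rho [:: 2;3;6;8] by apply: mono.
have c2 : rho [:: 1;5;7] <= rho [:: 0;1;5;7] by apply: mono.
have chain1 : forall x5 x8, x5 \in E -> lab x5 = 5 -> x8 \in E -> lab x8 = 8 -> False.
  move=> x5 x8 x5E x5l x8E x8l.
  have c1 := @sub4 [:: 1;4;5;6] [:: 1;5;7] [:: 1;4;5;6;7] [:: 1;5] isT.
  have c3 := @sub4 [:: 1;4;5;6;7] [:: 0;1;5;7] [:: 0;1;4;5;6;7] [:: 1;5;7] isT.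
  have c4 : rho [:: 0;1;2;3;4;5;6;7] <= rho [:: 0;1;4;5;6;7] by apply: absorb.
  have c5 := @sub4 [:: 3;7;8] [:: 3;4;6;8] [:: 3;4;6;7;8] [:: 3;8] isT.
  have c7 := @sub4 [:: 3;4;6;7;8] [:: 2;3;6;8] [:: 2;3;4;6;7;8] [:: 3;6;8] isT.
  have c8 : rho [:: 0;1;2;3;4;6;7;8] <= rho [:: 2;3;4;6;7;8] by apply: absorb.
  have c9 : r E + 2 <= rho [:: 3;8] + rho [:: 0;1;2;4;5;6;7].
    by apply: (@L1lab _ _ d x8 a b) => //; sides.
  have c10 : rho [:: 0;1;2;4;5;6;7] <= rho [:: 0;1;2;3;4;5;6;7] by apply: mono.
  have c11 : r E + 2 <= rho [:: 1;5] + rho [:: 0;2;3;4;6;7;8].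
    by apply: (@L1lab _ _ b x5 a c) => //; sides.
  have c12 : rho [:: 0;2;3;4;6;7;8] <= rho [:: 0;1;2;3;4;6;7;8] by apply: mono.
  slia.
have chain2 : forall x7 y7 x6, x7 \in E -> lab x7 = 7 -> y7 \in E -> lab y7 = 7 -> x7 != y7 ->
    x6 \in E -> lab x6 = 6 -> False.
  move=> x7 y7 x6 x7E x7l y7E y7l xy7 x6E x6l.
  have e1 := @sub4 [:: 1;4;5;6] [:: 3;4;6;8] [:: 1;3;4;5;6;8] [:: 4;6] isT.
  have e2 : rho [:: 0;1;2;3;4;5;6;8] <= rho [:: 1;3;4;5;6;8] by apply: absorb.
  have e3 := @sub4 [:: 3;7;8] [:: 1;5;7] [:: 1;3;5;7;8] [:: 7] isT.
  have e4 := @sub4 [:: 1;3;5;7;8] [:: 0;1;5;7] [:: 0;1;3;5;7;8] [:: 1;5;7] isT.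
  have e5 : rho [:: 0;1;2;3;4;5;7;8] <= rho [:: 0;1;3;5;7;8] by apply: absorb.
  have e6 : r E + 2 <= rho [:: 7] + rho [:: 0;1;2;3;4;5;6;8].
    by apply: (@L1lab _ _ x7 y7 a b) => //; sides.
  have e7 : r E + 2 <= rho [:: 4;6] + rho [:: 0;1;2;3;5;7;8].
    by apply: (@L1lab _ _ p x6 a b) => //; sides.
  have e8 : rho [:: 0;1;2;3;5;7;8] <= rho [:: 0;1;2;3;4;5;7;8] by apply: mono.
  slia.
case: (posnP #|SL [:: 5]|) => [c5|/wit [x5 [x5E x5l]]].
- have r5 := rho_card [:: 5]; rewrite c5 in r5.
  case: (region 7) => [c7|[[c7 [x7 [x7E x7l]]]|[x7 [y7 [x7E y7E x7l y7l xy7]]]]].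
  + case: D1 => x [xE [xl|xl]]; have := wit_card xE xl; by rewrite ?c5 ?c7.
  + apply: (triX x7E (or_intror x7l)).
    have t1 := @sub4 [:: 1] [:: 5;7] [:: 1;5;7] [::] isT.
    have t2 := @sub4 [:: 5] [:: 7] [:: 5;7] [::] isT.
    have t3 : rho [:: 1] = 1 by rewrite rhoP.
    have r7 := rho_card [:: 7]; rewrite c7 in r7.
    slia.
  + case: (posnP #|SL [:: 6]|) => [c6z|/wit [x6 [x6E x6l]]]; last exact: chain2 x7E x7l y7E y7l xy7 x6E x6l.
    have r6 := rho_card [:: 6]; rewrite c6z in r6.
    have u1 : rho [:: 1;4] <= rho [:: 1;4;5;6] by apply: mono.
    have u2 : rho [:: 1;4] = 2 by rewrite rhoP.
    have f1 := @sub4 [:: 3;7;8] [:: 0;1;5;7] [:: 0;1;3;5;7;8] [:: 7] isT.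
    have f2 : rho [:: 0;1;2;3;4;5;7;8] <= rho [:: 0;1;3;5;7;8] by apply: absorb.
    have f2' := @sub4 [:: 0;1;2;3;4;5;7;8] [:: 6] [:: 0;1;2;3;4;5;6;7;8] [::] isT.
    have f3 : r E + 2 <= rho [:: 7] + rho [:: 0;1;2;3;4;5;6;8].
      by apply: (@L1lab _ _ x7 y7 a b) => //; sides.
    have f4 : rho [:: 0;1;2;3;4;5;6;8] <= rho [:: 0;2;3;5;6;8] by apply: absorb.
    have f5 := @sub4 [:: 2;3;6;8] [:: 0;5] [:: 0;2;3;5;6;8] [::] isT.
    have f6 := @sub4 [:: 0] [:: 5] [:: 0;5] [::] isT.
    have f7 : rho [:: 0] = 1 by rewrite rhoP.
    slia.
- case: (posnP #|SL [:: 8]|) => [c8|/wit [x8 [x8E x8l]]]; last exact: chain1 x5E x5l x8E x8l.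
  have r8 := rho_card [:: 8]; rewrite c8 in r8.
  case: (posnP #|SL [:: 6]|) => [c6z|/wit [x6 [x6E x6l]]].
    by case: D1' => x [xE [xl|xl]]; have := wit_card xE xl; rewrite ?c6z ?c8.
  case: (region 7) => [c7|[[c7 [x7 [x7E x7l]]]|[x7 [y7 [x7E y7E x7l y7l xy7]]]]];
    last exact: chain2 x7E x7l y7E y7l xy7 x6E x6l.
  + have k1 := @cardsub [:: 3] [:: 7;8] [:: 3;7;8] isT.
    have k2 := @cardsub [:: 7] [:: 8] [:: 7;8] isT.
    have k3 : #|SL [:: 3]| = 1 by rewrite card1.
    slia.
  + have r7 := rho_card [:: 7]; rewrite c7 in r7.
    have g0 : r E + 2 <= rho [:: 3;7;8] + rho [:: 0;1;2;4;5;6].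
      by apply: (@L1lab _ _ d x7 a b) => //; sides.
    have g0' : rho [:: 0;1;2;4;5;6] <= rho [:: 0;1;2;3;4;5;6;7;8] by apply: mono.
    have g2 := @sub4 [:: 2;3;6;8] [:: 1;4;5;6] [:: 1;2;3;4;5;6;8] [:: 6] isT.
    have g3 : r E + 2 <= rho [:: 0;7] + rho [:: 1;2;3;4;5;6;8].
      by apply: (@L1lab _ _ a x7 b c) => //; sides.
    have g3' := @sub4 [:: 0] [:: 7] [:: 0;7] [::] isT.
    have g3'' : rho [:: 0] = 1 by rewrite rhoP.
    case: (region 6) => [q6|[[q6 _]|[x6' [y6 [x6'E y6E x6'l y6l xy6]]]]].
    * by have := wit_card x6E x6l; rewrite q6.
    * apply: (triY x6E (or_introl x6l)).
      have t1 := @sub4 [:: 3] [:: 6;8] [:: 3;6;8] [::] isT.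
      have t2 := @sub4 [:: 6] [:: 8] [:: 6;8] [::] isT.
      have t3 : rho [:: 3] = 1 by rewrite rhoP.
      have r6 := rho_card [:: 6]; rewrite q6 in r6.
      slia.
    * have g4 : r E + 2 <= rho [:: 6] + rho [:: 0;1;2;3;4;5;7;8].
        by apply: (@L1lab _ _ x6' y6 a b) => //; sides.
      have g5 : rho [:: 0;1;2;3;4;5;7;8] <= rho [:: 0;1;2;5;7;8] by apply: absorb.
      have g6 := @sub4 [:: 0;1;5;7] [:: 2;8] [:: 0;1;2;5;7;8] [::] isT.
      have g7 := @sub4 [:: 2] [:: 8] [:: 2;8] [::] isT.
      have g8 : rho [:: 2] = 1 by rewrite rhoP.
      slia.
Qed.


Lemma caseB : b \in U -> d \in U -> p \in V -> False.
Proof.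
move=> bU dU pV.
case: memf => [[cX dX pX aY bY] [pY aU aV cU cV]].
have pU := VnotU pE pV; have bV := UnotV bE bU; have dV := UnotV dE dU.
have U_eq : U = SL [:: 1;3;5;6].
  apply: SL_eq => // z zE; case: (labP zE) => [->|->|->|->|->|h _ _ _ _|h _ _ _ _|h _ _ _ _|h _ _ _ _] //=;
  by rewrite ?bU ?dU ?(negbTE aU) ?(negbTE cU) ?(negbTE pU) //; first [rewrite h | rewrite (negbTE h)].
have V_eq : V = SL [:: 4;7;8].
  apply: SL_eq => // z zE; case: (labP zE) => [->|->|->|->|->|_ h _ _ _|_ h _ _ _|_ h _ _ _|_ h _ _ _] //=;
  by rewrite ?pV ?(negbTE dV) ?(negbTE aV) ?(negbTE cV) ?(negbTE bV) //; first [rewrite h | rewrite (negbTE h)].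
have HrUVL : rho [:: 1;3;5;6] + rho [:: 4;7;8] <= r E + 1 by rewrite /rho -U_eq -V_eq.
have cU2 : 1 < #|SL [:: 1;3;5;6]| by rewrite -U_eq.
have cV2 : 1 < #|SL [:: 4;7;8]| by rewrite -V_eq.
have d2 := D2; have d3 := D3; have hrl := HrL; have r0 := rho_nil; have rO := rhoO.
have c6 := @sub4 [:: 3;6;8] [:: 4] [:: 3;4;6;8] [::] isT.
have c6' : rho [:: 4] = 1 by rewrite rhoP.
have c6'' : rho [:: 3;6;8] <= rho [:: 2;3;6;8] by apply: mono.
have c2 : rho [:: 1;5;7] <= rho [:: 0;1;5;7] by apply: mono.
have c2' := @sub4 [:: 1;5;7] [:: 4] [:: 1;4;5;7] [::] isT.
have chain1 : forall x5 x8, x5 \in E -> lab x5 = 5 -> x8 \in E -> lab x8 = 8 -> False.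
  move=> x5 x8 x5E x5l x8E x8l.
  have h1 := @sub4 [:: 1;3;5;6] [:: 1;5;7] [:: 1;3;5;6;7] [:: 1;5] isT.
  have h2 := @sub4 [:: 1;3;5;6;7] [:: 0;1;5;7] [:: 0;1;3;5;6;7] [:: 1;5;7] isT.
  have h3 : rho [:: 0;1;2;3;4;5;6;7] <= rho [:: 0;1;3;5;6;7] by apply: absorb.
  have h4 := @sub4 [:: 4;7;8] [:: 3;4;6;8] [:: 3;4;6;7;8] [:: 4;8] isT.
  have h5 := @sub4 [:: 3;4;6;7;8] [:: 2;3;6;8] [:: 2;3;4;6;7;8] [:: 3;6;8] isT.
  have h6 : rho [:: 0;1;2;3;4;6;7;8] <= rho [:: 2;3;4;6;7;8] by apply: absorb.
  have h6' : rho [:: 0;2;3;4;6;7;8] <= rho [:: 0;1;2;3;4;6;7;8] by apply: mono.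
  have h7 : r E + 2 <= rho [:: 4;8] + rho [:: 0;1;2;3;5;6;7].
    by apply: (@L1lab _ _ p x8 a b) => //; sides.
  have h7' : rho [:: 0;1;2;3;5;6;7] <= rho [:: 0;1;2;3;4;5;6;7] by apply: mono.
  have h8 : r E + 2 <= rho [:: 1;5] + rho [:: 0;2;3;4;6;7;8].
    by apply: (@L1lab _ _ b x5 a c) => //; sides.
  slia.
have chain2 : forall x7 x6, x7 \in E -> lab x7 = 7 -> x6 \in E -> lab x6 = 6 -> False.
  move=> x7 x6 x7E x7l x6E x6l.
  have h1 := @sub4 [:: 1;3;5;6] [:: 3;6;8] [:: 1;3;5;6;8] [:: 3;6] isT.
  have h2 := @sub4 [:: 1;3;5;6;8] [:: 2;3;6;8] [:: 1;2;3;5;6;8] [:: 3;6;8] isT.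
  have h3 : rho [:: 0;1;2;3;4;5;6;8] <= rho [:: 1;2;3;5;6;8] by apply: absorb.
  have h4 := @sub4 [:: 4;7;8] [:: 1;4;5;7] [:: 1;4;5;7;8] [:: 4;7] isT.
  have h5 := @sub4 [:: 1;4;5;7;8] [:: 0;1;5;7] [:: 0;1;4;5;7;8] [:: 1;5;7] isT.
  have h6 : rho [:: 0;1;2;3;4;5;7;8] <= rho [:: 0;1;4;5;7;8] by apply: absorb.
  have h6' : rho [:: 0;1;2;4;5;7;8] <= rho [:: 0;1;2;3;4;5;7;8] by apply: mono.
  have h7 : r E + 2 <= rho [:: 4;7] + rho [:: 0;1;2;3;5;6;8].
    by apply: (@L1lab _ _ p x7 a b) => //; sides.
  have h7' : rho [:: 0;1;2;3;5;6;8] <= rho [:: 0;1;2;3;4;5;6;8] by apply: mono.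
  have h8 : r E + 2 <= rho [:: 3;6] + rho [:: 0;1;2;4;5;7;8].
    by apply: (@L1lab _ _ d x6 a b) => //; sides.
  slia.
case: (posnP #|SL [:: 5]|) => [c5|/wit [x5 [x5E x5l]]].
- have r5 := rho_card [:: 5]; rewrite c5 in r5.
  case: (posnP #|SL [:: 6]|) => [c6z|/wit [x6 [x6E x6l]]].
  + have r6 := rho_card [:: 6]; rewrite c6z in r6.
    have u1 : rho [:: 1;3] <= rho [:: 1;3;5;6] by apply: mono.
    have u2 : rho [:: 1;3] = 2 by rewrite rhoP.
    have k1 := @sub4 [:: 4;7;8] [:: 0;1;5;7] [:: 0;1;4;5;7;8] [:: 7] isT.
    have k2 : rho [:: 0;1;2;3;4;5;7;8] <= rho [:: 0;1;4;5;7;8] by apply: absorb.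
    have k3 := @sub4 [:: 0;1;2;3;4;5;7;8] [:: 6] [:: 0;1;2;3;4;5;6;7;8] [::] isT.
    case: (region 7) => [c7|[[c7 [x7 [x7E x7l]]]|[x7 [y7 [x7E y7E x7l y7l xy7]]]]].
    * case: D1 => x [xE [xl|xl]]; have := wit_card xE xl; by rewrite ?c5 ?c7.
    * apply: (triX x7E (or_intror x7l)).
      have t1 := @sub4 [:: 1] [:: 5;7] [:: 1;5;7] [::] isT.
      have t2 := @sub4 [:: 5] [:: 7] [:: 5;7] [::] isT.
      have t3 : rho [:: 1] = 1 by rewrite rhoP.
      have r7 := rho_card [:: 7]; rewrite c7 in r7.
      slia.
    * have k4 : r E + 2 <= rho [:: 7] + rho [:: 0;1;2;3;4;5;6;8].
        by apply: (@L1lab _ _ x7 y7 a b) => //; sides.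
      have k5 : rho [:: 0;1;2;3;4;5;6;8] <= rho [:: 0;2;3;5;6;8] by apply: absorb.
      have k6 := @sub4 [:: 2;3;6;8] [:: 0;5] [:: 0;2;3;5;6;8] [::] isT.
      have k7 := @sub4 [:: 0] [:: 5] [:: 0;5] [::] isT.
      have k8 : rho [:: 0] = 1 by rewrite rhoP.
      slia.
  + case: (posnP #|SL [:: 7]|) => [c7|/wit [x7 [x7E x7l]]]; last exact: chain2 x7E x7l x6E x6l.
    by case: D1 => x [xE [xl|xl]]; have := wit_card xE xl; rewrite ?c5 ?c7.
- case: (posnP #|SL [:: 8]|) => [c8|/wit [x8 [x8E x8l]]]; last exact: chain1 x5E x5l x8E x8l.
  case: (posnP #|SL [:: 6]|) => [c6z|/wit [x6 [x6E x6l]]].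
    by case: D1' => x [xE [xl|xl]]; have := wit_card xE xl; rewrite ?c6z ?c8.
  case: (posnP #|SL [:: 7]|) => [c7|/wit [x7 [x7E x7l]]]; last exact: chain2 x7E x7l x6E x6l.
  have k1 := @cardsub [:: 4] [:: 7;8] [:: 4;7;8] isT.
  have k2 := @cardsub [:: 7] [:: 8] [:: 7;8] isT.
  have k3 : #|SL [:: 4]| = 1 by rewrite card1.
  slia.
Qed.

Lemma case0 : b \in U -> d \in U -> p \in U -> False.
Proof.
move=> bU dU pU.
case: memf => [[cX dX pX aY bY] [pY aU aV cU cV]].
have bV := UnotV bE bU; have dV := UnotV dE dU; have pV := UnotV pE pU.
have U_eq : U = SL [:: 1;3;4;5;6].
  apply: SL_eq => // z zE; case: (labP zE) => [->|->|->|->|->|h _ _ _ _|h _ _ _ _|h _ _ _ _|h _ _ _ _] //=;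
  by rewrite ?bU ?dU ?pU ?(negbTE aU) ?(negbTE cU) //; first [rewrite h | rewrite (negbTE h)].
have V_eq : V = SL [:: 7;8].
  apply: SL_eq => // z zE; case: (labP zE) => [->|->|->|->|->|_ h _ _ _|_ h _ _ _|_ h _ _ _|_ h _ _ _] //=;
  by rewrite ?(negbTE pV) ?(negbTE dV) ?(negbTE aV) ?(negbTE cV) ?(negbTE bV) //; first [rewrite h | rewrite (negbTE h)].
have HrUVL : rho [:: 1;3;4;5;6] + rho [:: 7;8] <= r E + 1 by rewrite /rho -U_eq -V_eq.
have cV2 : 1 < #|SL [:: 7;8]| by rewrite -V_eq.
have a1 : rho [:: 0;1;2;3;4;5;6] <= rho [:: 1;3;4;5;6] by apply: absorb.
have c2 : 1 < #|SL [:: 0;1;2;3;4;5;6]|.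
  apply/card_gt1P; exists a, b; rewrite !inE aE bE labA labB /=.
  by case: neqs => [[-> _ _ _] _ _ _].
have a2 := @L1card [:: 0;1;2;3;4;5;6] [:: 7;8] isT c2 cV2.
slia.
Qed.


Lemma Tset (C : {set T}) : C \subset P -> #|C| = 3 -> r E <= r (E :\: C).
Proof.
move=> CP cC.
have CE : C \subset E := subset_trans CP HPE.
case: (leqP (r E) (r (E :\: C))) => // lt; exfalso.
apply: (negP (Htriad CP)).
rewrite /mtriad /cocircuit cC eqxx andbT CE /=; apply/andP; split.
  by rewrite /codependent /dual_rank cC; slia.
apply/forallP => A; apply/implyP => AC.
have AE : A \subset E := subset_trans (proper_sub AC) CE.
have cA := proper_card AC; rewrite cC in cA.
have := @cork A AE (ltnSE cA).
by rewrite /codependent /dual_rank -leqNgt; slia.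
Qed.

Lemma card3 (u v w : T) : u != v -> u != w -> v != w -> #|[set u; v; w]| = 3.
Proof.
move=> uv uw vw.
have -> : [set u; v; w] = [set y in [:: u; v; w]] by apply/setP => y; rewrite !inE -!orbA.
by rewrite cardsE (card_uniqP _) //= !inE negb_or uv uw vw.
Qed.

Lemma caseS z : U = [set z] -> r U + r V <= r E -> False.
Proof.
move=> Uz h.
case: memf => [[cX dX pX aY bY] [pY aU aV cU cV]].
have zU : z \in U by rewrite Uz set11.
have zE := subsetP HUE z zU.
have za : z != a by apply: contraNneq aU => <-.
have zc : z != c by apply: contraNneq cU => <-.
have Veq : V = E :\: [set a; c; z].
  apply/setP => w; rewrite !inE; case wE: (w \in E); last first.
    by rewrite andbF; apply/negP => /(subsetP HVE); rewrite wE.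
  rewrite andbT; move: (HUV wE); rewrite Uz inE.
  by case: (w \in V); case: (w == a); case: (w == c); case: (w == z).
have hz1 : #|[set z]| <= r [set z] by apply: indep2; rewrite ?cards1 // sub1set.
rewrite cards1 in hz1; rewrite Uz in h.
case: neqs => [[ab ac ad ap] [bc bd bp] [cd cp] dp].
case zP: (z \in P).
  have := @Tset [set a; c; z]; rewrite -Veq.
  have -> : #|[set a; c; z]| = 3 by rewrite card3 // eq_sym.
  have -> : [set a; c; z] \subset P.
    by apply/subsetP => y; rewrite !inE => /orP[/orP[]|] /eqP ->; rewrite ?aP ?cP ?zP.
  move=> /(_ isT erefl); slia.
have zb : z != b by apply: contraFneq zP => ->; exact: bP.
have zd : z != d by apply: contraFneq zP => ->; exact: dP.
have zp : z != p by apply: contraFneq zP => ->; exact: pP.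
have h1 := rank_submod HVE HPE.
have h2 : r P = 3 by rewrite rP // cardP5.
have inV : forall y, y \in E -> y != a -> y != c -> y != z -> y \in V.
  by move=> y yE ya yc yz; rewrite Veq !inE yE (negbTE ya) (negbTE yc) (negbTE yz).
have bV : b \in V by apply: inV; rewrite ?bE // 1?eq_sym.
have dV : d \in V by apply: inV; rewrite ?dE // 1?eq_sym.
have pV : p \in V by apply: inV; rewrite ?pE // 1?eq_sym.
have h3 : r [set b; d; p] <= r (V :&: P).
  apply: rank_mono; last by apply: subset_trans (subsetIl _ _) HVE.
  by apply/subsetP => y; rewrite !inE => /orP[/orP[]|] /eqP ->; rewrite ?bV ?dV ?pV ?bP ?dP ?pP.
have h4 : r [set b; d; p] = 3.
  rewrite rP ?card3 //; by apply/subsetP => y; rewrite !inE => /orP[/orP[]|] /eqP ->; rewrite ?bP ?dP ?pP.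
have h5 : V :|: P = E :\: [set z].
  apply/setP => y; rewrite Veq !inE.
  have [->|yz] := eqVneq y z; first by rewrite orbT zP.
  case yP: (y \in P); first by rewrite orbT (subsetP HPE y yP).
  have ya : y != a by apply: contraFneq yP => ->; exact: aP.
  have yc : y != c by apply: contraFneq yP => ->; exact: cP.
  by rewrite (negbTE ya) (negbTE yc) orbF.
have h6 := @cork [set z]; rewrite sub1set zE cards1 in h6; have := h6 isT isT.
rewrite -h5; move: h1 h2 h3 h4 h hz1; slia.
Qed.

End Key.

Lemma key (T : finType) (M : matroid T) (P : {set T}) (a b c d p : T) (X Y : {set T}) :
  three_connected M -> P \subset ground M ->
  (forall S : {set T}, S \subset P -> rank M S = minn #|S| 3) ->
  (forall C : {set T}, C \subset mclosure M P -> ~~ mtriangle M C) ->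
  (forall C : {set T}, C \subset P -> ~~ mtriad M C) ->
  p \in P -> X \subset ground M -> Y \subset ground M ->
  (forall z, z \in ground M -> (z \in X) + (z \in Y) + (z == p) = 1) ->
  X :&: P = [set a; b] -> Y :&: P = [set c; d] -> a != b -> c != d ->
  rank M X + rank M Y <= rank M (ground M) + 1 ->
  three_connected_del M [set a; c].
Proof.
move=> H3 HPE rP Htri Htriad pP HXE HYE HXY HXP HYP ab cd Hr.
have HaP : (a \in X) && (a \in P) by have := set21 a b; rewrite -HXP inE.
have HbP : (b \in X) && (b \in P) by have := set22 a b; rewrite -HXP inE.
have HcP : (c \in Y) && (c \in P) by have := set21 c d; rewrite -HYP inE.
have HdP : (d \in Y) && (d \in P) by have := set22 c d; rewrite -HYP inE.
case/andP: HaP => Ha aP; case/andP: HbP => Hb bP; case/andP: HcP => Hc cP; case/andP: HdP => Hd dP.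
have inE' : forall z, z \in P -> z \in ground M by move=> z /(subsetP HPE).
have nXY : forall x y, x \in X -> y \in Y -> x != y.
  move=> x y xX yY; apply/eqP => exy; move: (HXY x (subsetP HXE x xX)).
  by rewrite xX exy yY; case: (y == p).
have nXp : forall x, x \in X -> x != p.
  move=> x xX; apply/eqP => exy; move: (HXY x (subsetP HXE x xX)).
  by rewrite xX exy eqxx; case: (p \in Y).
have nYp : forall x, x \in Y -> x != p.
  move=> x xY; apply/eqP => exy; move: (HXY x (subsetP HYE x xY)).
  by rewrite xY exy eqxx; case: (p \in X).
have HP : P = [set a; b; c; d; p].
  apply/setP => y; rewrite !inE; apply/idP/idP.
    move=> yP; have yE := inE' y yP; move: (HXY y yE).
    case yX: (y \in X).
      have : y \in X :&: P by rewrite inE yX yP.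
      by rewrite HXP !inE => /orP[] ->; rewrite ?orbT.
    case yY: (y \in Y).
      have : y \in Y :&: P by rewrite inE yY yP.
      by rewrite HYP !inE => /orP[] ->; rewrite ?orbT.
    by case: (y == p) => //; rewrite orbT.
  by case/orP => [/orP[/orP[/orP[]|]|]|] /eqP ->.
have Huniq : uniq [:: a; b; c; d; p].
  rewrite /= !inE !negb_or ab (nXY _ _ Ha Hc) (nXY _ _ Ha Hd) (nXp _ Ha).
  by rewrite (nXY _ _ Hb Hc) (nXY _ _ Hb Hd) (nXp _ Hb) cd (nYp _ Hc) (nYp _ Hd).
have HP' : P = [set c; d; a; b; p].
  rewrite HP; apply/setP => y; rewrite !inE.
  by case: (y == a); case: (y == b); case: (y == c); case: (y == d); case: (y == p).
have Huniq' : uniq [:: c; d; a; b; p].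
  by move: Huniq; rewrite -(perm_uniq (introT permPl (perm_catCA [:: a; b] [:: c; d] [:: p]))).
have HXY' : forall z, z \in ground M -> (z \in Y) + (z \in X) + (z == p) = 1.
  by move=> z zE; rewrite (addnC (z \in Y)) HXY.
have Hr' : rank M Y + rank M X <= rank M (ground M) + 1 by rewrite addnC.
move=> k U hk; apply/negP => /and4P [UE' kU kV HrU].
set E := ground M in HXY HXY' HPE HXE HYE inE' Hr Hr' UE' kV HrU *.
set V := (E :\: [set a; c]) :\: U in kV HrU.
have HUE : U \subset E := subset_trans UE' (subsetDl _ _).
have HVE : V \subset E := subset_trans (subsetDl _ _) (subsetDl _ _).
have ac : a != c := nXY _ _ Ha Hc.
have HUV : forall z, z \in E -> (z \in U) + (z \in V) + (z == a) + (z == c) = 1.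
  move=> z zE; rewrite /V !inE zE andbT.
  case zU: (z \in U).
    by have := subsetP UE' z zU; rewrite !inE => /andP[]; case: (z == a); case: (z == c).
  case: (z =P a) => [->|_]; first by rewrite (negbTE ac).
  by case: (z == c).
have HVU : forall z, z \in E -> (z \in V) + (z \in U) + (z == a) + (z == c) = 1.
  by move=> z zE; rewrite (addnC (z \in V)) HUV.
have HUV' : forall z, z \in E -> (z \in U) + (z \in V) + (z == c) + (z == a) = 1.
  by move=> z zE; rewrite -addnA (addnC (z == c)) addnA HUV.
have HVU' : forall z, z \in E -> (z \in V) + (z \in U) + (z == c) + (z == a) = 1.
  by move=> z zE; rewrite (addnC (z \in V)) HUV'.
have rE' : rank M (E :\: [set a; c]) <= rank M E by apply: rank_mono => //; apply: subsetDl.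
case/andP: hk => k1 k3.
case: (leqP #|U| 1) => [U1|U2].
  have /cards1P [z Uz] : #|U| == 1 by rewrite eqn_leq U1 (leq_trans k1 kU).
  have h : rank M U + rank M V <= rank M E.
    have k1' : k = 1 by apply/eqP; rewrite eqn_leq k1 (leq_trans kU U1).
    rewrite k1' in HrU; move: HrU rE'; clear; lia.
  exact: (@caseS T M P a b c d p X Y U V H3 HPE HP Huniq rP Htriad HXY Ha Hb Hc Hd HUE HVE HUV z Uz h).
case: (leqP #|V| 1) => [V1|V2].
  have /cards1P [z Vz] : #|V| == 1 by rewrite eqn_leq V1 (leq_trans k1 kV).
  have h : rank M V + rank M U <= rank M E.
    have k1' : k = 1 by apply/eqP; rewrite eqn_leq k1 (leq_trans kV V1).
    rewrite k1' in HrU; move: HrU rE'; clear; lia.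
  exact: (@caseS T M P a b c d p X Y V U H3 HPE HP Huniq rP Htriad HXY Ha Hb Hc Hd HVE HUE HVU z Vz h).
have HrUV : rank M U + rank M V <= rank M E + 1 by move: HrU rE' k3; clear; lia.
have HrVU : rank M V + rank M U <= rank M E + 1 by rewrite addnC.
have inUV : forall z, z \in E -> z != a -> z != c -> (z \in U) || (z \in V).
  move=> z zE za zc; move: (HUV z zE); rewrite (negbTE za) (negbTE zc).
  by case: (z \in U); case: (z \in V).
have notUV : forall z, z \in E -> z \in U -> z \notin V.
  by move=> z zE zU; move: (HUV z zE); rewrite zU; case: (z \in V).
have ba : b != a by rewrite eq_sym.
have bc : b != c := nXY _ _ Hb Hc.
have da : d != a by rewrite eq_sym (nXY _ _ Ha Hd).
have dc : d != c by rewrite eq_sym.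
have pa : p != a by rewrite eq_sym (nXp _ Ha).
have pc : p != c by rewrite eq_sym (nYp _ Hc).
have bUV := inUV b (inE' b bP) ba bc.
have dUV := inUV d (inE' d dP) da dc.
have pUV := inUV p (inE' p pP) pa pc.
case bU: (b \in U); case dU: (d \in U); case pU: (p \in U);
  rewrite ?bU ?dU ?pU /= in bUV dUV pUV.
- by apply: (@case0 T M P a b c d p X Y U V).
- by apply: (@caseB T M P a b c d p X Y U V).
- by apply: (@caseA T M P a b c d p X Y U V).
- by apply: (@caseA T M P c d a b p Y X V U).
- by apply: (@caseA T M P c d a b p Y X U V).
- by apply: (@caseA T M P a b c d p X Y V U).
- by apply: (@caseB T M P a b c d p X Y V U).
- by apply: (@case0 T M P a b c d p X Y V U).
Qed.

Theorem lemma4p3 (T : finType) (M : matroid T) (P : {set T}) :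
  three_connected M ->
  restr_iso_uniform M P 3 5 ->
  (forall C : {set T}, C \subset mclosure M P -> ~~ mtriangle M C) ->
  (forall C : {set T}, C \subset P -> ~~ mtriad M C) ->
  forall p : T, p \in P -> ~ three_connected_del M [set p] ->
  exists p1 p2 p3 p4 : T,
    [/\ uniq [:: p1; p2; p3; p4], [set p1; p2; p3; p4] = P :\ p &
        forall i j : T, i \in [:: p1; p2] -> j \in [:: p3; p4] ->
          three_connected_del M [set i; j]].
Proof.
move=> H3 [HPE [f [finj fim frk]]] Htri Htriad p pP Hn.
have rP : forall S : {set T}, S \subset P -> rank M S = minn #|S| 3.
  move=> S SP.
  have eS : f @: (f @^-1: S) = S.
    apply/setP => y; apply/imsetP/idP => [[x]|yS].
      by rewrite inE => fxS ->.
    have : y \in f @: setT by rewrite fim (subsetP SP).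
    by case/imsetP => x _ exy; exists x => //; rewrite inE -exy.
  by rewrite -eS frk /uniform_rank card_imset.
have cP : #|P| = 5 by rewrite -fim card_imset // cardsT card_ord.
have rPP : rank M P = 3 by rewrite rP // cP.
have [k [X0 [hk hs]]] : exists k X0, (1 <= k < 3) /\ ksep M (ground M :\: [set p]) k X0.
  case: (classic (exists k X0, (1 <= k < 3) /\ ksep M (ground M :\: [set p]) k X0)) => // hne.
  exfalso; apply: Hn => k X0 hk; apply/negP => hs; apply: hne; by exists k, X0.
case/and4P: hs => XE' kX kY hr.
set E := ground M in HPE H3 XE' kY hr *.
set Y0 := (E :\: [set p]) :\: X0 in kY hr *.
have HXE : X0 \subset E := subset_trans XE' (subsetDl _ _).
have HYE : Y0 \subset E := subset_trans (subsetDl _ _) (subsetDl _ _).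
have pE : p \in E := subsetP HPE p pP.
have HXY : forall z, z \in E -> (z \in X0) + (z \in Y0) + (z == p) = 1.
  move=> z zE; rewrite /Y0 !inE zE andbT.
  case zX: (z \in X0).
    by have := subsetP XE' z zX; rewrite !inE => /andP[]; case: (z == p).
  by case: (z == p).
have rE' : rank M (E :\: [set p]) <= rank M E by apply: rank_mono => //; apply: subsetDl.
have Hr : rank M X0 + rank M Y0 <= rank M E + 1.
  case/andP: hk => _ k3; move: hr rE' k3; clear; lia.
have claim : forall A B : {set T}, A \subset E -> E :\: (A :|: [set p]) = B ->
    k <= #|A| -> k <= #|B| -> rank M A + rank M B < rank M E + k -> 2 < #|A :&: P| -> False.
  move=> A B AE hB kA kB hAB c3.
  have h1 := rank_submod AE HPE.
  have h2 : rank M (A :&: P) = 3 by rewrite rP ?subsetIr //; move: c3; clear; case: #|_| => [|[|[|n]]].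
  have h3 : rank M (A :|: [set p]) <= rank M (A :|: P).
    by apply: rank_mono; [rewrite setUS // sub1set | rewrite subUset AE HPE].
  have := H3 k (A :|: [set p]) hk.
  rewrite /ksep hB subUset AE sub1set pE kB /=.
  have -> : k <= #|A :|: [set p]| by apply: leq_trans kA (subset_leq_card (subsetUl _ _)).
  rewrite /= -leqNgt => h4.
  move: h1 h2 h3 h4 hAB rPP; rewrite /E; clear; lia.
have cX : #|X0 :&: P| <= 2.
  rewrite leqNgt; apply/negP; apply: (claim X0 Y0) => //.
  apply/setP => z; rewrite /Y0 !inE; by case: (z \in X0); case: (z == p).
  move: hr rE'; clear; lia.
have cY : #|Y0 :&: P| <= 2.
  rewrite leqNgt; apply/negP; apply: (claim Y0 X0) => //.
    apply/setP => z; rewrite /Y0 !inE.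
    case zX: (z \in X0); last by case: (z == p); case: (z \in E).
    by have := subsetP XE' z zX; rewrite !inE => /andP[] ->.
  move: hr rE'; rewrite addnC; clear; lia.
clearbody Y0.
have cXY : #|X0 :&: P| + #|Y0 :&: P| = 4.
  have e : (X0 :&: P) :|: (Y0 :&: P) = P :\ p.
    apply/setP => z; rewrite !inE; case zP: (z \in P); last by rewrite !andbF.
    rewrite !andbT; move: (HXY z (subsetP HPE z zP)).
    by case: (z \in X0); case: (z \in Y0); case: (z == p).
  have d : (X0 :&: P) :&: (Y0 :&: P) = set0.
    apply/eqP; rewrite -subset0; apply/subsetP => z; rewrite !inE => /andP[/andP[zX zP] /andP[zY _]].
    by move: (HXY z (subsetP HPE z zP)); rewrite zX zY.
  have := cardsUI (X0 :&: P) (Y0 :&: P); rewrite e d cards0 addn0.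
  have := cardsD1 p P; rewrite pP cP.
  clear; lia.
have cX2 : #|X0 :&: P| == 2 by rewrite eqn_leq cX; move: cXY cY; clear; lia.
have cY2 : #|Y0 :&: P| == 2 by rewrite eqn_leq cY; move: cXY cX; clear; lia.
case/cards2P: cX2 => a [b [ab HXP]].
case/cards2P: cY2 => c [d [cd HYP]].
have K := @key T M P _ _ _ _ p X0 Y0 H3 HPE rP Htri Htriad pP HXE HYE HXY.
have HXP' : X0 :&: P = [set b; a] by rewrite HXP setUC.
have HYP' : Y0 :&: P = [set d; c] by rewrite HYP setUC.
have ba : b != a by rewrite eq_sym.
have dc : d != c by rewrite eq_sym.
have Kac := K a b c d HXP HYP ab cd Hr.
have Kad := K a b d c HXP HYP' ab dc Hr.
have Kbc := K b a c d HXP' HYP ba cd Hr.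
have Kbd := K b a d c HXP' HYP' ba dc Hr.
have memX : forall z, z \in [set a; b] -> (z \in X0) && (z \in P) by move=> z; rewrite -HXP inE.
have memY : forall z, z \in [set c; d] -> (z \in Y0) && (z \in P) by move=> z; rewrite -HYP inE.
have nXY : forall x y, x \in X0 -> y \in Y0 -> x != y.
  move=> x y xX yY; apply/eqP => exy; move: (HXY x (subsetP HXE x xX)).
  by rewrite xX exy yY; case: (y == p).
case/andP: (memX a (set21 a b)) => aX aP.
case/andP: (memX b (set22 a b)) => bX bP.
case/andP: (memY c (set21 c d)) => cYm cP'.
case/andP: (memY d (set22 c d)) => dY dP.
exists a, b, c, d; split.
- rewrite /= !inE !negb_or ab (nXY _ _ aX cYm) (nXY _ _ aX dY) (nXY _ _ bX cYm) (nXY _ _ bX dY).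
  by rewrite cd.
- apply/setP => z; rewrite !inE.
  case zP: (z \in P); last first.
    rewrite andbF; apply/negP => /orP[/orP[/orP[]|]|] /eqP ez; move: zP; rewrite ez;
      by rewrite ?aP ?bP ?cP' ?dP.
  rewrite andbT; move: (HXY z (subsetP HPE z zP)).
  case zX: (z \in X0).
    have : z \in X0 :&: P by rewrite inE zX zP.
    rewrite HXP !inE => /orP[] /eqP ez; rewrite ez; case: (_ \in Y0); case: (_ == p) => //= _;
      by rewrite eqxx ?orbT.
  case zY: (z \in Y0).
    have : z \in Y0 :&: P by rewrite inE zY zP.
    rewrite HYP !inE => /orP[] /eqP ez; rewrite ez; case: (_ == p) => //= _;
      by rewrite eqxx ?orbT.
  have pX : p \notin X0 by move: (HXY p pE); rewrite eqxx; case: (p \in X0); case: (p \in Y0).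
  have pY : p \notin Y0 by move: (HXY p pE); rewrite eqxx; case: (p \in X0); case: (p \in Y0).
  have pn : forall x, (x \in X0) || (x \in Y0) -> (p == x) = false.
    by move=> x /orP[] xm; apply/eqP => px; [move: pX|move: pY]; rewrite px xm.
  rewrite add0n => /eqP; case: (z =P p) => [->|] // _.
  by rewrite !pn ?aX ?bX ?cYm ?dY ?orbT.
- move=> i j; rewrite !inE => /orP[] /eqP -> /orP[] /eqP ->; by [].
Qed.
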